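(* The cellular automaton $F$ on the free group $G$ with generators $a,b$ and alphabet $A=\{0,1,\iota,\beta\}$ described in the context has no equicontinuity point.
   Context: $G$ is the free group on $\{a,b\}$ with generating set $E=\{a,a^{-1},b,b^{-1}\}$, word norm $\|g\|$, and Cantor metric $d(x,y)=2^{-k}$, $k=\min\{\|g\|:x_g\neq y_g\}$, on $A^G$, with closed balls $B$. In a configuration $c\in A^G$, a position $g$ is free if $c_g\in\{0,1\}$ and $|\{g'\in gE: c_{g'}\in\{0,1\}\}|\geq 2$. A position $g$ is blocked in $c$ if either ($c_g=\iota$ and $c_{g'}\in\{\iota,\beta\}$ for all $g'\in gE$), or ($c_g=\beta$ and exactly one $g'\in gE$ has $c_{g'}=\iota$ and all other elements of $gE$ are free in $c$). The map $F:A^G\to A^G$ is defined by: $F(c)_g=c_g+\sum_{g'\in gE,\,c_{g'}\in\{0,1\}}c_{g'}\bmod 2$ if $c_g\in\{0,1\}$; $F(c)_g=c_g$ if $g$ is blocked in $c$; $F(c)_g=0$ otherwise. (It is a cellular automaton of radius 2.) $x$ is an equicontinuity point of $F$ if $\forall\epsilon>0\,\exists\delta>0\,\forall t\in\mathbb{N}$, $F^t(B(x,\delta))\subseteq B(F^t(x),\epsilon)$. *)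

(* Defs.v *)
From HB Require Import structures.
From Stdlib Require Import Reals ClassicalEpsilon.
From mathcomp Require Import all_boot.

Set Implicit Arguments.
Unset Strict Implicit.
Unset Printing Implicit Defensive.

Inductive gen := ga | gA | gb | gB.

Definition gen_eqb (x y : gen) : bool :=
  match x, y with
  | ga, ga | gA, gA | gb, gb | gB, gB => true
  | _, _ => false
  end.

Lemma gen_eqP : Equality.axiom gen_eqb.
Proof. by case; case; constructor. Qed.

HB.instance Definition _ := hasDecEq.Build gen gen_eqP.

Definition ginv (x : gen) : gen :=
  match x with ga => gA | gA => ga | gb => gB | gB => gb end.

(** A word is reduced if no two adjacent letters are mutually inverse.
    Words are stored right-to-left: the head of the list is the
    rightmost letter of the group element. *)
Fixpoint reducedb (w : seq gen) : bool :=
  match w with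
  | x :: ((y :: _) as w') => (y != ginv x) && reducedb w'
  | _ => true
  end.

Definition FG := {w : seq gen | reducedb w}.

Definition rmulw (w : seq gen) (e : gen) : seq gen :=
  match w with
  | x :: w' => if x == ginv e then w' else e :: w
  | [::] => [:: e]
  end.

Lemma rmulw_red (w : seq gen) (e : gen) : reducedb w -> reducedb (rmulw w e).
Proof.
case: w => [|x w'] //=.
case: ifP => [_ | hx].
  by case: w' => [|y w''] //= /andP[].
by move=> h; rewrite /= hx h.
Qed.

Definition gmul (g : FG) (e : gen) : FG :=
  exist _ (rmulw (val g) e) (rmulw_red e (valP g)).

Definition norm (g : FG) : nat := size (val g).

Definition gens : seq gen := [:: ga; gA; gb; gB].

Inductive Alph := A0 | A1 | Aiota | Abeta.

Definition conf := FG -> Alph.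

Definition isbit (s : Alph) : bool := match s with A0 | A1 => true | _ => false end.
Definition bitval (s : Alph) : nat := match s with A1 => 1 | _ => 0 end.
Definition is_iota (s : Alph) : bool := match s with Aiota => true | _ => false end.
Definition is_beta (s : Alph) : bool := match s with Abeta => true | _ => false end.

Definition nbrs (c : conf) (g : FG) : seq Alph := [seq c (gmul g e) | e <- gens].

Definition is_free (c : conf) (g : FG) : bool :=
  isbit (c g) && (2 <= count isbit (nbrs c g)).

Definition blocked (c : conf) (g : FG) : bool :=
  match c g with
  | Aiota => all (fun s => is_iota s || is_beta s) (nbrs c g)
  | Abeta =>
      (count is_iota (nbrs c g) == 1) &&
      all (fun e => is_iota (c (gmul g e)) || is_free c (gmul g e)) gens
  | _ => false
  end.

Definition CA (c : conf) : conf := fun g =>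
  if isbit (c g) then
    (if odd (bitval (c g) + sumn [seq bitval s | s <- nbrs c g & isbit s])
     then A1 else A0)
  else if blocked c g then c g else A0.

Open Scope R_scope.

Definition mindiff (x y : conf) : nat :=
  epsilon (inhabits 0%nat)
    (fun k => (exists g, norm g = k /\ x g <> y g) /\
              forall g, x g <> y g -> (k <= norm g)%N).

Definition dist (x y : conf) : R :=
  match excluded_middle_informative (exists g, x g <> y g) with
  | left _ => (/ 2) ^ (mindiff x y)
  | right _ => 0
  end.

Definition ball (x : conf) (delta : R) : conf -> Prop := fun y => dist x y <= delta.

Definition equicontinuity_point (f : conf -> conf) (x : conf) : Prop :=
  forall eps : R, 0 < eps -> exists delta : R, 0 < delta /\
    forall (t : nat) (y : conf), ball x delta y -> ball (iter t f x) eps (iter t f y).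

Close Scope R_scope.

(* Main.v *)
Require Import Defs.
From Stdlib Require Import Reals.
From mathcomp Require Import all_boot.
From Stdlib Require Import ClassicalEpsilon Classical Lra.
From mathcomp Require Import zify.

Set Implicit Arguments.
Unset Strict Implicit.
Unset Printing Implicit Defensive.


Lemma bit_persist (c : conf) g : isbit (c g) -> isbit (CA c g).
Proof. by rewrite /CA => ->; case: ifP. Qed.

Lemma iter_persist (c : conf) g s t : (s <= t)%N -> isbit (iter s CA c g) -> isbit (iter t CA c g).
Proof.
move=> /subnKC <-; elim: (t - s)%N => [|d IH]; first by rewrite addn0.
by rewrite addnS /= => H; apply: bit_persist; apply: IH.
Qed.

Lemma nonbit_const (c : conf) g : ~~ isbit (CA c g) -> CA c g = c g.
Proof.
rewrite /CA; case: ifP => [_|_]; first by case: ifP.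
by case: ifP.
Qed.

Lemma iter_nonbit (c : conf) g t : ~~ isbit (iter t CA c g) -> iter t CA c g = c g.
Proof.
elim: t => [|t IH] //= H.
rewrite nonbit_const //; apply: IH.
by apply: contra H; apply: bit_persist.
Qed.

Lemma ginvK e : ginv (ginv e) = e. Proof. by case: e. Qed.

Lemma gmulK g e : gmul (gmul g e) (ginv e) = g.
Proof.
apply: val_inj; case: g => [w Hw] /=.
case: w Hw => [|x w] Hw /=; first by rewrite ginvK eqxx.
case: ifP => [/eqP Hx|Hx] /=.
  case: w Hw => [|y w] //=; first by rewrite Hx.
  case/andP => Hy _; rewrite Hx ginvK in Hy *.
  by rewrite (negbTE Hy).
by rewrite ginvK eqxx.
Qed.

Lemma in_gens e : e \in gens. Proof. by case: e. Qed.

Lemma all_nbrs (c : conf) g e (P : Alph -> bool) : all P (nbrs c g) -> P (c (gmul g e)).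
Proof. by rewrite /nbrs all_map => /allP; apply; apply: in_gens. Qed.

Definition ischild (g : FG) (e : gen) := norm (gmul g e) == (norm g).+1.

Lemma ischild_val g e : ischild g e -> val (gmul g e) = e :: val g.
Proof.
case: g => [[|x w] Hw]; rewrite /ischild /norm /gmul //=.
case: ifP => // _ /eqP; lia.
Qed.

Lemma gmul_cases g e : val (gmul g e) = e :: val g \/
  exists x s, val g = x :: s /\ val (gmul g e) = s.
Proof.
case: g => [[|x w] Hw]; rewrite /gmul /=; first by left.
case: ifP => _; [right; by exists x, w | by left].
Qed.

Lemma norm_gmul_le g e : (norm (gmul g e) <= (norm g).+1)%N.
Proof.
rewrite /norm; case: (gmul_cases g e) => [->|[x [s [-> ->]]]] //=; lia.
Qed.

Lemma two_child (g : FG) (P : gen -> bool) : (2 <= count P gens)%N ->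
  exists e, ischild g e && P e.
Proof.
rewrite /gens /=.
case Ha: (P ga); case HA: (P gA); case Hb: (P gb); case HB: (P gB) => //= _;
case: g => [[|x w] Hw]; rewrite /ischild /norm /gmul /=;
try (case: x {Hw});
first [ by exists ga; rewrite /= ?Ha //= eqxx
      | by exists gA; rewrite /= ?HA //= eqxx
      | by exists gb; rewrite /= ?Hb //= eqxx
      | by exists gB; rewrite /= ?HB //= eqxx ].
Qed.

Lemma child_exists g : exists e, ischild g e.
Proof.
by case: (@two_child g predT) => // e /andP[H _]; exists e.
Qed.


Lemma growth (c : conf) g : isbit (c g) ->
  (2 <= count (fun e => isbit (CA c (gmul g e))) gens)%N.
Proof.
move=> Hg; case Hf: (is_free c g).
  move: Hf; rewrite /is_free Hg /nbrs count_map => H.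
  apply: leq_trans H _; apply: sub_count => e /=; apply: bit_persist.
suff H : forall e, isbit (CA c (gmul g e)).
  by rewrite (@eq_count _ _ predT) ?count_predT // => e; rewrite H.
move=> e; rewrite /CA; case: ifP => [_|Hq]; first by case: ifP.
case Hb: (blocked c (gmul g e)); last by []. exfalso.
move: Hb; rewrite /blocked; case Hcq: (c (gmul g e)) => //.
- move/(@all_nbrs _ _ (ginv e)); rewrite gmulK.
  by move: Hg; case: (c g).
- case/andP => _ /allP /(_ (ginv e) (in_gens _)); rewrite gmulK Hf orbF.
  by move: Hg; case: (c g).
Qed.

Definition teq (c1 c2 : conf) := forall g, (isbit (c1 g) && isbit (c2 g)) \/ c1 g = c2 g.

Lemma teq_bit c1 c2 g : teq c1 c2 -> isbit (c1 g) = isbit (c2 g).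
Proof. by move/(_ g) => [|->] //; case: (c1 g); case: (c2 g). Qed.
Lemma teq_iota c1 c2 g : teq c1 c2 -> is_iota (c1 g) = is_iota (c2 g).
Proof. by move/(_ g) => [|->] //; case: (c1 g); case: (c2 g). Qed.
Lemma teq_beta c1 c2 g : teq c1 c2 -> is_beta (c1 g) = is_beta (c2 g).
Proof. by move/(_ g) => [|->] //; case: (c1 g); case: (c2 g). Qed.

Lemma teq_free c1 c2 g : teq c1 c2 -> is_free c1 g = is_free c2 g.
Proof.
move=> H; rewrite /is_free /nbrs !count_map (teq_bit g H).
by congr (_ && _); congr (_ <= _)%N; apply: eq_count => e /=; rewrite (teq_bit _ H).
Qed.

Lemma blocked_teq c1 c2 g : teq c1 c2 -> blocked c1 g = blocked c2 g.
Proof.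
move=> H; rewrite /blocked.
have E1 : all (fun s => is_iota s || is_beta s) (nbrs c1 g) =
          all (fun s => is_iota s || is_beta s) (nbrs c2 g).
  by rewrite /nbrs !all_map; apply: eq_all => e /=; rewrite (teq_iota _ H) (teq_beta _ H).
have E2 : count is_iota (nbrs c1 g) = count is_iota (nbrs c2 g).
  by rewrite /nbrs !count_map; apply: eq_count => e /=; rewrite (teq_iota _ H).
have E3 : all (fun e => is_iota (c1 (gmul g e)) || is_free c1 (gmul g e)) gens =
          all (fun e => is_iota (c2 (gmul g e)) || is_free c2 (gmul g e)) gens.
  by apply: eq_all => e /=; rewrite (teq_iota _ H) (teq_free _ H).
rewrite E1 E2 E3.
case: (H g) => [|->] //.
by case: (c1 g); case: (c2 g).
Qed.

Lemma CA_teq c1 c2 : teq c1 c2 -> teq (CA c1) (CA c2).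
Proof.
move=> H g; case: (H g) => [/andP[H1 H2]|E].
  by left; rewrite !bit_persist.
case B: (isbit (c1 g)).
  by left; rewrite !bit_persist // -E.
by right; rewrite /CA -E B (blocked_teq g H).
Qed.

Lemma iter_teq c1 c2 t : teq c1 c2 -> teq (iter t CA c1) (iter t CA c2).
Proof. by move=> H; elim: t => //= t IH; apply: CA_teq. Qed.

Lemma CA_same c1 c2 g : teq c1 c2 -> c1 g = c2 g ->
  (forall e, c1 (gmul g e) = c2 (gmul g e)) -> CA c1 g = CA c2 g.
Proof.
move=> H E En.
have N : nbrs c1 g = nbrs c2 g by rewrite /nbrs; apply: eq_map.
by rewrite /CA N E (blocked_teq g H).
Qed.

Lemma sum_bits (l : seq Alph) :
  sumn [seq bitval s | s <- l & isbit s] = sumn [seq bitval s | s <- l].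
Proof. by elim: l => //= s l IH; case: s => /=; rewrite IH. Qed.

Lemma CA_diff c1 c2 g e0 : teq c1 c2 -> c1 g = c2 g ->
  (forall e, e != e0 -> c1 (gmul g e) = c2 (gmul g e)) ->
  c1 (gmul g e0) <> c2 (gmul g e0) -> isbit (c1 g) -> CA c1 g <> CA c2 g.
Proof.
move=> H E En D B.
have HB := H (gmul g e0).
rewrite /CA -E B /nbrs !sum_bits /gens /=.
case: e0 En D HB => En D HB;
(try rewrite (En ga isT)); (try rewrite (En gA isT)); (try rewrite (En gb isT)); (try rewrite (En gB isT));
match type of D with c1 (gmul g ?e) <> _ =>
  move: D HB; case: (c1 (gmul g e)); case: (c2 (gmul g e));
  move=> D [/andP[? ?]|Eq] //; (try by case: D) end;
rewrite ?oddD /=;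
repeat match goal with |- context [odd (bitval ?t)] => case: (odd (bitval t)) end; by [].
Qed.


Fixpoint lcp (a b : seq gen) : nat :=
  match a, b with
  | x :: a', y :: b' => if x == y then (lcp a' b').+1 else 0
  | _, _ => 0
  end.

Lemma lcp_sizel a b : (lcp a b <= size a)%N.
Proof. elim: a b => [|x a IH] [|y b] //=; case: ifP => //= _; apply: IH. Qed.

Lemma lcp_sizer a b : (lcp a b <= size b)%N.
Proof. elim: a b => [|x a IH] [|y b] //=; case: ifP => //= _; apply: IH. Qed.

Lemma lcp_rcons a b x : (lcp a b <= lcp (rcons a x) b <= (lcp a b).+1)%N.
Proof.
elim: a b => [|z a IH] [|y b] //=; first by case: ifP.
by case: ifP => //= _; apply: IH.
Qed.

Lemma lcp_cat a b c : lcp (a ++ b) (a ++ c) = (size a + lcp b c)%N.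
Proof. by elim: a => //= x a ->; rewrite eqxx. Qed.

Lemma lcp_self_cat a r : lcp a (a ++ r) = size a.
Proof. by rewrite -{1}(cats0 a) lcp_cat /= addn0. Qed.

Definition dst (g v : FG) :=
  (size (val g) + size (val v) - 2 * lcp (rev (val g)) (rev (val v)))%N.

Lemma dst_lip g e v : (dst g v <= (dst (gmul g e) v).+1)%N.
Proof.
rewrite /dst; case: (gmul_cases g e) => [->|[x [s [-> ->]]]].
  rewrite rev_cons.
  have := lcp_rcons (rev (val g)) (rev (val v)) e.
  have := lcp_sizel (rev (val g)) (rev (val v)).
  have := lcp_sizer (rcons (rev (val g)) e) (rev (val v)).
  have := lcp_sizer (rev (val g)) (rev (val v)).
  rewrite !size_rev /= => *; lia.
rewrite rev_cons.
have := lcp_rcons (rev s) (rev (val v)) x.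
have := lcp_sizel (rev s) (rev (val v)).
have := lcp_sizer (rcons (rev s) x) (rev (val v)).
have := lcp_sizel (rcons (rev s) x) (rev (val v)).
rewrite size_rcons !size_rev /= => *; lia.
Qed.

Lemma dst_refl g : dst g g = 0%N.
Proof. by rewrite /dst -{2}(cats0 (rev (val g))) lcp_self_cat size_rev; lia. Qed.

Definition flip (s : Alph) := match s with Defs.A0 => Defs.A1 | Defs.A1 => Defs.A0 | s => s end.
Definition flipat (c : conf) (q : FG) : conf := fun g => if g == q then flip (c g) else c g.

Section Signal.
Variables (y1 : conf) (p : nat -> FG) (E : nat -> gen) (L : nat).
Hypothesis Hp : forall i, p i.+1 = gmul (p i) (E i).
Hypothesis Hc : forall i, ischild (p i) (E i).
Hypothesis Hbits : forall j, (j < L)%N -> isbit (iter (L - j.+1) CA y1 (p j)).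
Hypothesis HpL : isbit (y1 (p L)).

Let y2 := flipat y1 (p L).

Lemma pval i : val (p i.+1) = E i :: val (p i).
Proof. by rewrite Hp ischild_val. Qed.

Lemma suffix k j : (j + k = L)%N -> exists w, val (p L) = w ++ val (p j) /\ size w = k.
Proof.
elim: k j => [|k IH] j HL.
  by exists [::]; rewrite addn0 in HL; rewrite HL.
case: (IH j.+1); first by rewrite -HL addnS addSn.
move=> w [Hw Sw]; exists (rcons w (E j)); rewrite cat_rcons -pval Hw.
by rewrite size_rcons Sw.
Qed.

Lemma teq_y : teq y1 y2.
Proof.
move=> g; rewrite /y2 /flipat; case: eqP => [->|_]; last by right.
by left; move: HpL; case: (y1 (p L)).
Qed.

Lemma signal_inv t : (t <= L)%N ->
  iter t CA y1 (p (L - t)) <> iter t CA y2 (p (L - t)) /\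
  forall g, iter t CA y1 g <> iter t CA y2 g -> (dst g (p L) <= t)%N.
Proof.
elim: t => [|t IH] HtL.
  rewrite subn0 /=; split.
    by rewrite /y2 /flipat eqxx; move: HpL; case: (y1 (p L)).
  move=> g; rewrite /y2 /flipat; case: eqP => [->|] //.
  by rewrite dst_refl.
have [IHa IHb] := IH (ltnW HtL).
set c1 := iter t CA y1; set c2 := iter t CA y2.
have T : teq c1 c2 by apply: iter_teq; apply: teq_y.
split; last first.
  move=> g /= Hd.
  case: (classic (c1 g = c2 g)) => [Eg|Ng]; last by have := IHb _ Ng; lia.
  case: (classic (forall e, c1 (gmul g e) = c2 (gmul g e))) => [Ae|Ne].
    by case: Hd; apply: CA_same.
  case: (not_all_ex_not _ _ Ne) => e He.
  have := IHb _ He; have := dst_lip g e (p L); lia.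
pose j := (L - t.+1)%N.
have Ej : (L - t = j.+1)%N by rewrite /j; lia.
rewrite Ej in IHa.
case: (suffix (k := t) (j := j.+1)); first by rewrite /j; lia.
move=> w [Hw Sw]; rewrite pval in Hw.
set q := val (p j) in Hw.
have Dq : dst (p j) (p L) = t.+1.
  rewrite /dst Hw rev_cat rev_cons -cats1 -catA lcp_self_cat size_cat /= Sw size_rev -/q.
  lia.
have Dn : forall e, e != E j -> dst (gmul (p j) e) (p L) = t.+2.
  move=> e He; rewrite /dst Hw; case: (gmul_cases (p j) e) => [->|[x [s [Hs ->]]]].
    rewrite rev_cat !rev_cons -!cats1 -!catA lcp_cat /= (negbTE He) -/q.
    rewrite size_cat /= Sw size_rev; lia.
  rewrite /q Hs -cat_rcons -cat_rcons rev_cat lcp_self_cat !size_cat !size_rcons Sw size_rev.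
  lia.
simpl; rewrite -/c1 -/c2.
apply: (CA_diff (e0 := E j)) => //.
- case: (classic (c1 (p j) = c2 (p j))) => // N.
  by have := IHb _ N; rewrite Dq; lia.
- move=> e He; case: (classic (c1 (gmul (p j) e) = c2 (gmul (p j) e))) => // N.
  by have := IHb _ N; rewrite Dn //; lia.
- by rewrite -Hp.
- have := Hbits (j := j); rewrite /c1.
  have -> : (L - j.+1 = t)%N by rewrite /j; lia.
  by apply; rewrite /j; lia.
Qed.

Lemma signal : iter L CA y1 (p 0) <> iter L CA y2 (p 0).
Proof. by have [] := signal_inv (leqnn L); rewrite subnn. Qed.

End Signal.


Definition ext (x : conf) (n : nat) : conf := fun g => if (norm g <= n)%N then x g else A0.

Definition nextg (c : conf) (g : FG) : gen :=
  nth ga gens (find (fun e => ischild g e && isbit (c (gmul g e))) gens).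

Lemma nextg_spec (c : conf) g : (exists e, ischild g e && isbit (c (gmul g e))) ->
  ischild g (nextg c g) && isbit (c (gmul g (nextg c g))).
Proof.
case=> e He; rewrite /nextg.
apply: (@nth_find _ ga (fun e => ischild g e && isbit (c (gmul g e)))).
by apply/hasP; exists e => //; apply: in_gens.
Qed.

Section Path.
Variables (y1 : conf) (h : FG) (T0 : nat).
Hypothesis Hh : isbit (iter T0 CA y1 h).

Fixpoint pth (i : nat) : FG :=
  match i with
  | 0 => h
  | i'.+1 => gmul (pth i') (nextg (iter (T0 + i'.+1) CA y1) (pth i'))
  end.
Definition Ep (i : nat) : gen := nextg (iter (T0 + i.+1) CA y1) (pth i).

Lemma step k g : isbit (iter k CA y1 g) ->
  ischild g (nextg (iter k.+1 CA y1) g) && isbit (iter k.+1 CA y1 (gmul g (nextg (iter k.+1 CA y1) g))).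
Proof.
move=> Hg; apply: nextg_spec.
by have := growth Hg => /(two_child g) [e He]; exists e.
Qed.

Lemma pth_S i : pth i.+1 = gmul (pth i) (Ep i).
Proof. by []. Qed.

Lemma pth_inv i : isbit (iter (T0 + i) CA y1 (pth i)) /\ ischild (pth i) (Ep i).
Proof.
elim: i => [|i [IHb IHc]].
  rewrite addn0; split => //.
  by case/andP: (step Hh) => H _; rewrite /Ep /= addn1.
have Hb : isbit (iter (T0 + i.+1) CA y1 (pth i.+1)).
  by case/andP: (step IHb) => _ H; rewrite pth_S /Ep !addnS.
split => //.
by case/andP: (step Hb) => H _; rewrite /Ep !addnS; rewrite addnS in H.
Qed.


Lemma pth_norm i : norm (pth i) = (norm h + i)%N.
Proof.
elim: i => [|i IH]; first by rewrite addn0.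
by have [_ /eqP] := pth_inv i; rewrite -pth_S => ->; rewrite IH addnS.
Qed.
End Path.

Lemma key x n h T0 : isbit (iter T0 CA (ext x n) h) ->
  exists y1 y2 t, (forall g, (norm g <= n)%N -> y1 g = x g) /\
                  (forall g, (norm g <= n)%N -> y2 g = x g) /\
                  iter t CA y1 h <> iter t CA y2 h.
Proof.
move=> Hh.
set y1 := ext x n.
pose L := (T0 + 2 * n + 2)%N.
pose p := pth y1 h T0.
have Hext : forall g, (n < norm g)%N -> y1 g = A0.
  by move=> g Hg; rewrite /y1 /ext leqNgt Hg.
have HpL : (n < norm (p L))%N by rewrite /p (pth_norm Hh) /L; lia.
exists y1, (flipat y1 (p L)), L; split; [|split].
- by move=> g Hg; rewrite /y1 /ext Hg.
- move=> g Hg; rewrite /flipat; case: eqP => [E|_]; last by rewrite /y1 /ext Hg.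
  by rewrite -E in HpL; lia.
- have := @signal y1 p (Ep y1 h T0) L.
  apply.
  + by move=> i; apply: pth_S.
  + by move=> i; case: (pth_inv Hh i).
  + move=> j Hj.
    case: (leqP (norm (p j)) n) => Hn.
      apply: (@iter_persist _ _ (T0 + j)); last by case: (pth_inv Hh j).
      move: Hn; rewrite /p (pth_norm Hh) /L; lia.
    apply: (@iter_persist _ _ 0) => //=.
    by rewrite Hext.
  + by rewrite Hext.
Qed.


Lemma eat x n : (forall g, x g = Aiota) ->
  forall j g, (n.+1 <= norm g + j)%N -> isbit (iter j CA (ext x n) g).
Proof.
move=> Hx; elim=> [|j IH] g Hg.
  by rewrite /= /ext; rewrite addn0 in Hg; rewrite leqNgt Hg.
case: (leqP n.+1 (norm g + j)) => H1.
  by apply: bit_persist; apply: IH.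
set c := iter j CA (ext x n).
case B: (isbit (c g)); first by apply: bit_persist.
have Cg : c g = Aiota.
  rewrite /c iter_nonbit ?B // /ext.
  by have -> : (norm g <= n)%N by lia.
case: (child_exists g) => e He.
have Be : isbit (c (gmul g e)).
  by apply: IH; move/eqP: He => ->; lia.
rewrite /= -/c /CA B.
case Bl: (blocked c g) => //.
move: Bl; rewrite /blocked Cg => /(@all_nbrs _ _ e).
by move: Be; case: (c (gmul g e)).
Qed.

Definition idg : FG := exist _ [::] isT.

Lemma source x : exists h, forall n, (norm h < n)%N ->
  exists T0, isbit (iter T0 CA (ext x n) h).
Proof.
case: (classic (exists h, isbit (x h))) => [[h Hh]|NB].
  exists h => n Hn; exists 0%N; rewrite /= /ext.
  by have -> : (norm h <= n)%N by lia.
have NB' : forall g, ~~ isbit (x g).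
  by move=> g; apply/negP => H; apply: NB; exists g.
case: (classic (exists h, x h = Abeta)) => [[h Hh]|NBe].
  exists h => n Hn; exists 1%N => /=.
  have Ex : forall e, ext x n (gmul h e) = x (gmul h e).
    move=> e; rewrite /ext.
    by have -> : (norm (gmul h e) <= n)%N by have := norm_gmul_le h e; lia.
  have Eh : ext x n h = Abeta.
    by rewrite /ext; have -> : (norm h <= n)%N by lia.
  rewrite /CA Eh /=.
  case Bl: (blocked (ext x n) h) => //.
  move: Bl; rewrite /blocked Eh => /andP[C /allP A].
  have Ie : forall e, is_iota (ext x n (gmul h e)).
    move=> e; have := A e (in_gens e).
    by rewrite /is_free Ex (negbTE (NB' _)) orbF.
  by move: C; rewrite /nbrs count_map /gens /= !Ie.
have Hx : forall g, x g = Aiota.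
  move=> g; move: (NB' g); case E: (x g) => //= _.
  by exfalso; apply: NBe; exists g.
exists idg => n Hn; exists n.+1.
by apply: eat => //; rewrite /norm /= add0n.
Qed.

Local Open Scope R_scope.

Lemma half_pow_pos k : (0 < (/ 2) ^ k).
Proof. apply: pow_lt; lra. Qed.

Lemma half_pow_le k m : (k <= m)%N -> ((/ 2) ^ m <= (/ 2) ^ k).
Proof.
elim: m => [|m IH] Hk.
  have -> : k = 0%N by lia.
  by apply: Rle_refl.
case: (ltnP m k) => H.
  have -> : k = m.+1 by lia.
  by apply: Rle_refl.
have := IH H; have := half_pow_pos m.
rewrite [(/ 2) ^ m.+1]/= => A B; lra.
Qed.

Lemma half_pow_lt k : ((/ 2) ^ k.+1 < (/ 2) ^ k).
Proof. have := half_pow_pos k; rewrite [(/ 2) ^ k.+1]/=; lra. Qed.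

Lemma mindiff_spec (x y : conf) : (exists g, x g <> y g) ->
  (exists g, norm g = mindiff x y /\ x g <> y g) /\
  forall g, x g <> y g -> (mindiff x y <= norm g)%N.
Proof.
move=> [g0 D0]; rewrite /mindiff; apply epsilon_spec.
suff : forall m g, (norm g <= m)%N -> x g <> y g ->
  exists k, (exists g, norm g = k /\ x g <> y g) /\ forall g, x g <> y g -> (k <= norm g)%N.
  by move/(_ (norm g0) g0 (leqnn _) D0).
elim=> [|m IH] g Hg D.
  exists 0%N; split => //; by exists g; split => //; lia.
case: (classic (exists g', x g' <> y g' /\ (norm g' < norm g)%N)) => [[g' [D' H']]|N].
  by apply: (IH g') => //; lia.
exists (norm g); split; first by exists g.
move=> g' D'; rewrite leqNgt; apply/negP => H'; apply: N; by exists g'.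
Qed.

Lemma dist_small (x y : conf) n : (forall g, (norm g <= n)%N -> x g = y g) ->
  (Defs.dist x y <= (/ 2) ^ n.+1).
Proof.
move=> H; rewrite /Defs.dist; case: excluded_middle_informative => [Ex|_].
  have [[g [Eg D]] _] := mindiff_spec Ex.
  apply: half_pow_le; rewrite -Eg ltnNge; apply/negP => Hg; apply: D; exact: H.
by apply: Rlt_le; apply: half_pow_pos.
Qed.

Lemma dist_big (x y : conf) g : x g <> y g -> ((/ 2) ^ norm g <= Defs.dist x y).
Proof.
move=> D; rewrite /Defs.dist; case: excluded_middle_informative => [Ex|N].
  have [_ H] := mindiff_spec Ex.
  by apply: half_pow_le; apply: H.
by exfalso; apply: N; exists g.
Qed.

Theorem lemma8 : forall x : conf, ~ equicontinuity_point CA x.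
Proof.
move=> x Heq.
have [h Hs] := source x.
have [delta [Hd Hball]] := Heq ((/ 2) ^ (norm h).+1) (half_pow_pos _).
have [N HN] : exists N, forall n, (n >= N)%coq_nat -> (Rabs ((/ 2) ^ n) < delta).
  by apply: pow_lt_1_zero => //; rewrite Rabs_pos_eq; lra.
pose n := (N + norm h).+1%N.
have [T0 HT] := Hs n ltac:(rewrite /n; lia).
have [y1 [y2 [t [E1 [E2 D]]]]] := key HT.
have Hsmall : forall y, (forall g, (norm g <= n)%N -> y g = x g) -> Defs.ball x delta y.
  move=> y Hy; rewrite /Defs.ball.
  apply: Rle_trans (dist_small (n := n) _) _.
    by move=> g Hg; rewrite Hy.
  have := HN n.+1 ltac:(rewrite /n; apply/leP; lia).
  rewrite Rabs_pos_eq; first lra.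
  by apply: Rlt_le; apply: half_pow_pos.
have Hbig : forall y, iter t CA x h <> iter t CA y h ->
  ~ Defs.ball x delta y.
  move=> y Dy By; have := Hball t y By; rewrite /Defs.ball => Hb.
  have := dist_big Dy; have := half_pow_lt (norm h); lra.
case: (classic (iter t CA x h = iter t CA y1 h)) => Ex.
  by apply: (Hbig y2); [rewrite Ex | apply: Hsmall].
by apply: (Hbig y1) => //; apply: Hsmall.
Qed.
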